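(* If $P$ is a finite unit OC interval order, then $\dim(P) \le 3$.
   Context: Posets are finite and reflexive. A finite poset $P$ is a unit OC interval order if each element $x$ of $P$ can be assigned a real interval $I_x$ of length $1$ which is either open, $(a,a+1)$, or closed, $[a,a+1]$ (both types may occur in the same representation), such that for distinct $x,y$, $x<y$ in $P$ if and only if $I_x$ and $I_y$ are disjoint and every point of $I_x$ is less than every point of $I_y$. A realizer of $P$ is a set $\mathcal{R}$ of linear extensions of $P$ such that $x<y$ in $P$ if and only if $x<y$ in every $L \in \mathcal{R}$; the dimension $\dim(P)$ is the minimum cardinality of a realizer. *)

(* Defs.v *)
From HB Require Import structures.
From mathcomp Require Import all_boot all_order all_algebra.
From mathcomp Require Import reals.
From Stdlib Require List.
Set Implicit Arguments. Unset Strict Implicit. Unset Printing Implicit Defensive.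
Import Order.TTheory GRing.Theory Num.Theory.
Local Open Scope ring_scope.

Definition is_poset (T : finType) (le : rel T) : Prop :=
  reflexive le /\ antisymmetric le /\ transitive le.

Definition in_unit_interval (R : realType) (a : R) (c : bool) (t : R) : bool :=
  if c then (a <= t) && (t <= a + 1) else (a < t) && (t < a + 1).

Definition unit_OC_interval_order (R : realType) (T : finType) (le : rel T)
  : Prop :=
  exists (a : T -> R) (c : T -> bool),
    forall x y : T, x != y ->
      (le x y <->
        ((forall t : R, ~ (in_unit_interval (a x) (c x) t /\
                           in_unit_interval (a y) (c y) t)) /\
         (forall s t : R, in_unit_interval (a x) (c x) s ->
                          in_unit_interval (a y) (c y) t -> s < t))).

Definition linear_extension (T : finType) (le : rel T) (L : rel T) : Prop :=
  [/\ reflexive L, antisymmetric L, transitive L,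
      total L & forall x y, le x y -> L x y].

Definition realizer (T : finType) (le : rel T) (Ls : seq (rel T)) : Prop :=
  (forall L, List.In L Ls -> linear_extension le L) /\
  (forall x y : T, le x y <-> (forall L, List.In L Ls -> L x y)).

Definition dim_le (T : finType) (le : rel T) (k : nat) : Prop :=
  exists Ls : seq (rel T), realizer le Ls /\ (size Ls <= k)%N.

(* Main.v *)
Require Import Defs.
From mathcomp Require Import all_boot all_order all_algebra.
From mathcomp Require Import reals zify lra.
Set Implicit Arguments. Unset Strict Implicit. Unset Printing Implicit Defensive.
Import Order.TTheory GRing.Theory Num.Theory.
Local Open Scope ring_scope.

Fixpoint lexlt (R : realType) (s t : seq R) : bool :=
  match s, t with
  | x :: s', y :: t' => (x < y) || ((x == y) && lexlt s' t')
  | _, _ => false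
  end.

Lemma lexlt_irr (R : realType) (s : seq R) : lexlt s s = false.
Proof. by elim: s => [|x s IH] //=; rewrite ltxx eqxx IH. Qed.

Lemma lexlt_trans (R : realType) (s t u : seq R) :
  lexlt s t -> lexlt t u -> lexlt s u.
Proof.
elim: s t u => [|x s IH] [|y t] [|z u] //=.
case/orP=> [xy|/andP[/eqP-> st]]; case/orP=> [yz|/andP[/eqP<- tu]].
- by rewrite (lt_trans xy yz).
- by rewrite xy.
- by rewrite yz.
- by rewrite eqxx (IH _ _ st tu) orbT.
Qed.

Lemma lexlt_total (R : realType) (s t : seq R) : size s = size t ->
  [|| s == t, lexlt s t | lexlt t s].
Proof.
elim: s t => [|x s IH] [|y t] //= [] /IH.
case: (ltgtP x y) => [_|_|->]; rewrite ?orbT //= eqseq_cons eqxx /=.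
by case/or3P=> [/eqP->|->|->]; rewrite ?eqxx ?orbT.
Qed.

Lemma lexlt_neg (R : realType) (s t : seq R) :
  lexlt (map -%R s) (map -%R t) = lexlt t s.
Proof.
elim: s t => [|x s IH] [|y t] //=.
by rewrite ltrN2 eqr_opp IH (eq_sym x).
Qed.

Definition Lrel (R : realType) (T : finType) (key : T -> seq R) : rel T :=
  fun x y => (x == y) || lexlt (key x) (key y).

Lemma Lrel_ext (R : realType) (T : finType) (le : rel T) (key : T -> seq R) (n : nat) :
  (forall x y, key x = key y -> x = y) -> (forall x, size (key x) = n) ->
  (forall x y, x != y -> le x y -> lexlt (key x) (key y)) ->
  linear_extension le (Lrel key).
Proof.
move=> inj sz ext; split.
- by move=> x; rewrite /Lrel eqxx.
- move=> x y /andP[]; rewrite /Lrel; case: (eqVneq x y) => //= _ h1 h2.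
  by have := lexlt_trans h1 h2; rewrite lexlt_irr.
- move=> y x z; rewrite /Lrel; case: (eqVneq x y) => [->//|_] /=.
  case: (eqVneq y z) => [->|_] /=; first by move=> ->; rewrite orbT.
  by move=> h1 h2; rewrite (lexlt_trans h1 h2) orbT.
- move=> x y; rewrite /Lrel; case: (eqVneq x y) => [//|nxy] /=.
  have := lexlt_total (etrans (sz x) (esym (sz y))).
  case/or3P=> [/eqP/inj xy|->//|->]; last by rewrite orbT.
  by rewrite xy eqxx in nxy.
- move=> x y lxy; rewrite /Lrel; case: (eqVneq x y) => //= nxy.
  exact: ext.
Qed.


Definition LTk (R : realType) (T : finType) (k : T -> int) (f : T -> R) (c : T -> bool) (x y : T) : bool :=
  (k x + 1 < k y) || (k x + 1 == k y) && ((f x < f y) || (f x == f y) && ~~ (c x && c y)).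

Definition rk (lo cc : bool) : nat :=
  if lo then (if cc then 2 else 0) else (if cc then 1 else 3).

Lemma rk_lt cx cy : (rk true cx < rk false cy)%N = ~~ (cx && cy).
Proof. by case: cx; case: cy. Qed.

Lemma rk_neq cx cy : rk true cx != rk false cy.
Proof. by case: cx; case: cy. Qed.

Lemma step_a (m n : int) : n = m + 1 ->
  ((m %/ 2)%Z < (n %/ 2)%Z) \/ ((m %/ 2)%Z = (n %/ 2)%Z /\ (m %% 2)%Z = 0 /\ (n %% 2)%Z = 1).
Proof. move=> ->; lia. Qed.

Lemma step_b (m n : int) : m + 1 < n ->
  ((m %/ 2)%Z < (n %/ 2)%Z) /\ (((m+1) %/ 2)%Z < ((n+1) %/ 2)%Z).
Proof. move=> h; lia. Qed.

Lemma step_c (m n : int) : n = m + 1 ->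
  ((m %/ 2)%Z = (n %/ 2)%Z /\ (m %% 2)%Z = 0 /\ (n %% 2)%Z = 1) \/
  (((m+1) %/ 2)%Z = ((n+1) %/ 2)%Z /\ ((m+1) %% 2)%Z = 0 /\ ((n+1) %% 2)%Z = 1).
Proof. move=> ->; lia. Qed.


Definition keyg (R : realType) (T : finType) (g : T -> int) (lo : T -> bool)
  (f : T -> R) (c : T -> bool) (x : T) : seq R :=
  [:: (g x)%:~R; f x; (rk (lo x) (c x))%:R; (enum_rank x : nat)%:R].

Definition key3 (R : realType) (T : finType) (k : T -> int) (lo : T -> bool)
  (f : T -> R) (c : T -> bool) (x : T) : seq R :=
  [:: (k x)%:~R; - f x; - (rk (lo x) (c x))%:R; - (enum_rank x : nat)%:R].

Lemma keyg_inj (R : realType) (T : finType) (g : T -> int) (lo : T -> bool) (f : T -> R) (c : T -> bool) (x y : T) :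
  keyg g lo f c x = keyg g lo f c y -> x = y.
Proof.
by case=> _ _ _ /eqP; rewrite eqr_nat => /eqP /val_inj /enum_rank_inj.
Qed.

Lemma key3_inj (R : realType) (T : finType) (k : T -> int) (lo : T -> bool) (f : T -> R) (c : T -> bool) (x y : T) :
  key3 k lo f c x = key3 k lo f c y -> x = y.
Proof.
by case=> _ _ _ /eqP; rewrite eqr_opp eqr_nat => /eqP /val_inj /enum_rank_inj.
Qed.

Lemma keyg_ext (R : realType) (T : finType) (g : T -> int) (lo : T -> bool) (f : T -> R) (c : T -> bool) (x y : T) :
  (g x < g y) \/ (g x = g y /\ lo x /\ ~~ lo y /\
     ((f x < f y) || (f x == f y) && ~~ (c x && c y))) ->
  lexlt (keyg g lo f c x) (keyg g lo f c y).
Proof.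
rewrite /keyg /=; case=> [h|[-> [lx [ly hf]]]]; first by rewrite ltr_int h.
rewrite ltxx eqxx /= lx (negbTE ly).
case/orP: hf => [->//|/andP[/eqP-> hc]]; rewrite ltxx eqxx /=.
by rewrite ltr_nat rk_lt hc.
Qed.

Lemma keyg_conv (R : realType) (T : finType) (g : T -> int) (lo : T -> bool) (f : T -> R) (c : T -> bool) (x y : T) :
  g x = g y -> lo x -> ~~ lo y -> lexlt (keyg g lo f c x) (keyg g lo f c y) ->
  (f x < f y) || (f x == f y) && ~~ (c x && c y).
Proof.
rewrite /keyg /= => -> lx ly; rewrite ltxx eqxx /= lx (negbTE ly).
case: (ltgtP (f x) (f y)) => //= _.
rewrite ltr_nat rk_lt eqr_nat (negbTE (rk_neq _ _)) orbF.
by move=> ->.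
Qed.

Lemma key3_ext (R : realType) (T : finType) (k : T -> int) (lo : T -> bool) (f : T -> R) (c : T -> bool) (x y : T) :
  k x < k y -> lexlt (key3 k lo f c x) (key3 k lo f c y).
Proof. by rewrite /key3 /= ltr_int => ->. Qed.

Lemma lexlt_cons (R : realType) (x y : R) s t :
  lexlt (x :: s) (y :: t) = (x < y) || ((x == y) && lexlt s t).
Proof. by []. Qed.

Lemma neg_contra (R : realType) (a a' b b' : R) (s t : seq R) :
  a = a' -> b = b' -> lexlt (a :: s) (a' :: t) ->
  lexlt (b :: map -%R s) (b' :: map -%R t) -> False.
Proof.
move=> -> ->; rewrite !lexlt_cons !ltxx !eqxx /= lexlt_neg => h1 h2.
by have := lexlt_trans h1 h2; rewrite lexlt_irr.
Qed.

Lemma same_k (R : realType) (T : finType) (k g : T -> int) (lo : T -> bool) (f : T -> R) (c : T -> bool) (x y : T) :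
  k x = k y -> g x = g y ->
  lexlt (keyg g lo f c x) (keyg g lo f c y) ->
  lexlt (key3 k lo f c x) (key3 k lo f c y) -> False.
Proof.
move=> ek eg h1 h2.
apply: (neg_contra _ _ h1 h2); by rewrite ?ek ?eg.
Qed.

Lemma main_abs (R : realType) (T : finType) (le : rel T) (k : T -> int)
  (f : T -> R) (c : T -> bool) :
  reflexive le -> (forall x y, x != y -> le x y = LTk k f c x y) -> dim_le le 3.
Proof.
move=> refl H.
pose g1 x := ((k x) %/ 2)%Z.
pose lo1 x := ((k x) %% 2)%Z == 0.
pose g2 x := ((k x + 1) %/ 2)%Z.
pose lo2 x := ((k x + 1) %% 2)%Z == 0.
pose K1 := keyg g1 lo1 f c.
pose K2 := keyg g2 lo2 f c.
pose K3 := key3 k lo1 f c.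
have E1 : linear_extension le (Lrel K1).
  apply: (@Lrel_ext _ _ _ _ 4) => // [x y|x y nxy]; first exact: keyg_inj.
  rewrite H // /LTk => /orP[lt|/andP[/eqP e hf]].
    by apply: keyg_ext; left; have [] := step_b lt.
  apply: keyg_ext; case: (step_a (esym e)) => [h|[h1 [h2 h3]]]; first by left.
  by right; rewrite /g1 /lo1 h1 h2 h3.
have E2 : linear_extension le (Lrel K2).
  apply: (@Lrel_ext _ _ _ _ 4) => // [x y|x y nxy]; first exact: keyg_inj.
  rewrite H // /LTk => /orP[lt|/andP[/eqP e hf]].
    by apply: keyg_ext; left; have [] := step_b lt.
  apply: keyg_ext; case: (step_a (f_equal (fun z => z + 1) (esym e))) => [h|[h1 [h2 h3]]]; first by left.
  by right; rewrite /g2 /lo2 h1 h2 h3.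
have E3 : linear_extension le (Lrel K3).
  apply: (@Lrel_ext _ _ _ _ 4) => // [x y|x y nxy]; first exact: key3_inj.
  rewrite H // /LTk => h; apply: key3_ext.
  case/orP: h => [h|/andP[/eqP e _]]; lia.
exists [:: Lrel K1; Lrel K2; Lrel K3]; split=> //; split.
  by move=> L /= [<-|[<-|[<-|[]]]].
move=> x y; split.
  move=> lxy L /= [<-|[<-|[<-|[]]]].
  - by case: E1 => _ _ _ _; apply.
  - by case: E2 => _ _ _ _; apply.
  - by case: E3 => _ _ _ _; apply.
move=> h; case: (eqVneq x y) => [->|nxy]; first exact: refl.
have h1 := h _ (or_introl erefl).
have h2 := h _ (or_intror (or_introl erefl)).
have h3 := h _ (or_intror (or_intror (or_introl erefl))).
move: h1 h2 h3; rewrite /Lrel (negbTE nxy) !orFb => h1 h2 h3.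
rewrite H // /LTk.
case: (ltgtP (k x) (k y)) => [lt|gt|eq].
- case: (ltgtP (k x + 1) (k y)) => [//|gt'|e].
    by exfalso; clear -lt gt'; lia.
  rewrite /=.
  case: (step_c (esym e)) => [[e1 [e2 e3]]|[e1 [e2 e3]]].
    apply: (keyg_conv (g := g1) (lo := lo1) e1 _ _ h1); rewrite /lo1 ?e2 ?e3 //.
  apply: (keyg_conv (g := g2) (lo := lo2) e1 _ _ h2); rewrite /lo2 ?e2 ?e3 //.
- by move: h3; rewrite /K3 /key3 /= ltr_int eqr_int (ltNge (k x)) (ltW gt) /= (gt_eqF gt).
- by exfalso; apply: (same_k (g := g1) eq _ h1 h3); rewrite /g1 eq.
Qed.


Lemma inside (R : realType) (a p : R) (cc : bool) : a < p -> p < a + 1 ->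
  in_unit_interval a cc p.
Proof. by move=> h1 h2; rewrite /in_unit_interval; case: cc; rewrite ?h1 ?h2 ?ltW. Qed.

Lemma inside_mid (R : realType) (a : R) (cc : bool) : in_unit_interval a cc (a + 1/2).
Proof. by apply: inside; lra. Qed.

Lemma ivl_lt (R : realType) (ax ay : R) (cx cy : bool) :
  (forall s t, in_unit_interval ax cx s -> in_unit_interval ay cy t -> s < t) <->
  (ax + 1 < ay) || (ax + 1 == ay) && ~~ (cx && cy).
Proof.
split=> [h|].
  have hlt := h _ _ (inside_mid ax cx) (inside_mid ay cy).
  case: (ltrP (ax + 1) ay) => [//|hle] /=.
  case: (eqVneq (ax + 1) ay) => [e|ne] /=.
    apply/negP => /andP[cx1 cy1].
    suff : ay < ay by rewrite ltxx.
    by apply: h; rewrite /in_unit_interval ?cx1 ?cy1; apply/andP; split; lra.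
  have ne' : ay < ax + 1 by rewrite lt_neqAle eq_sym ne hle.
  suff : (ax + 1 + ay) / 2 < (ax + 1 + ay) / 2 by rewrite ltxx.
  by apply: h; apply: inside; lra.
move=> h s t; rewrite /in_unit_interval.
case/orP: h => [h|/andP[/eqP e hc]].
  by case: cx; case: cy => /andP[? ?] /andP[? ?]; lra.
by move: hc; case: cx; case: cy => //= _ /andP[? ?] /andP[? ?]; lra.
Qed.

Lemma frac_lt (R : realType) (m n : int) (u v : R) :
  0 <= u < 1 -> 0 <= v < 1 ->
  (m%:~R + u < n%:~R + v) = (m < n) || (m == n) && (u < v).
Proof.
move=> /andP[u0 u1] /andP[v0 v1].
case: (ltgtP m n) => [mn|nm|->] /=.
- have : (m + 1)%:~R <= n%:~R :> R by rewrite ler_int; lia.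
  by rewrite intrD => h; lra.
- have : (n + 1)%:~R <= m%:~R :> R by rewrite ler_int; lia.
  by rewrite intrD => h; apply/negbTE; rewrite -leNgt; lra.
- by rewrite ltrD2l.
Qed.

Lemma frac_eq (R : realType) (m n : int) (u v : R) :
  0 <= u < 1 -> 0 <= v < 1 ->
  (m%:~R + u == n%:~R + v) = (m == n) && (u == v).
Proof.
move=> hu hv; case: (ltgtP m n) => [mn|nm|->] /=.
- by apply: lt_eqF; rewrite frac_lt // mn.
- by apply: gt_eqF; rewrite frac_lt // nm.
- by rewrite (inj_eq (addrI _)).
Qed.

Theorem theorem2 (R : realType) (T : finType) (le : rel T) :
  is_poset le -> unit_OC_interval_order R le -> dim_le le 3.
Proof.
move=> [refl _] [a [c Hiff]].
pose k x := Num.floor (a x).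
pose f x := a x - (k x)%:~R.
have fb x : 0 <= f x < 1.
  have := Num.Theory.floor_itv (a x); rewrite /f /k intrD => /andP[h1 h2].
  by apply/andP; split; lra.
have ae x : a x = (k x)%:~R + f x by rewrite /f addrC subrK.
apply: (main_abs (k := k) (f := f) (c := c) refl) => x y nxy.
have -> : le x y = (a x + 1 < a y) || (a x + 1 == a y) && ~~ (c x && c y).
  apply/idP/idP => [/(Hiff _ _ nxy) [_ /ivl_lt] //|/ivl_lt h].
  apply/(Hiff _ _ nxy); split=> // t [h1 h2].
  by have := h t t h1 h2; rewrite ltxx.
have ax1 : a x + 1 = (k x + 1)%:~R + f x by rewrite ae intrD addrAC.
rewrite ax1 (ae y) frac_lt // frac_eq // /LTk.
by case: (k x + 1 < k y); case: (k x + 1 == k y); case: (f x < f y); case: (f x == f y).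
Qed.
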